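(* Let $m,n\geq2$, let $\mathbf p\in\mathbb R^m$, $\mathbf q\in\mathbb R^n$ be probability vectors with all entries strictly positive, and let $y(\mathbf p,\mathbf q)=(p_1,\dots,p_{m-1},1,q_1,\dots,q_{n-1})^T$. Let $S_1,\dots,S_{C(m,n)}$, $C(m,n)=\binom{mn}{m+n-1}$, be the subsets of $[mn]$ of cardinality $m+n-1$ (in lexicographic order), and $\mathfrak A_k=\mathfrak A(S_k)$. When $\det(\mathfrak A_k)\neq0$ and $\mathfrak A_k^{-1}y(\mathbf p,\mathbf q)\in\mathcal P_{m+n-1}$, let $P_k$ be the $m\times n$ matrix with $(P_k)_{\phi(i_l)}=x_l$ for $S_k=\{i_1<\dots<i_{m+n-1}\}$ and $x=\mathfrak A_k^{-1}y(\mathbf p,\mathbf q)$, and all other entries $0$. Then $$\mathcal C_e(\mathbf p,\mathbf q)=\mathscr C(\mathbf p,\mathbf q)=\{P_k:\det(\mathfrak A_k)\neq0,\ \mathfrak A_k^{-1}y(\mathbf p,\mathbf q)\in\mathcal P_{m+n-1},\ 1\le k\le C(m,n)\}.$$ Moreover, for $H$ a strictly concave function on $\mathcal C(\mathbf p,\mathbf q)$ such as the Shannon, Rényi or Tsallis entropy, setting $H_k=H(P_k)$ if $\det(\mathfrak A_k)\neq0$ and $\mathfrak A_k^{-1}y(\mathbf p,\mathbf q)\in\mathcal P_{m+n-1}$, and $H_k=\infty$ otherwise, one has $$\inf_{P\in\mathcal C(\mathbf p,\mathbf q)}H(P)=\min_{P\in\mathscr C(\mathbf p,\mathbf q)}H(P)=\min\{H_k:1\le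 k\le C(m,n)\}.$$
   Context: $\mathcal P_N$ is the set of probability vectors in $\mathbb R^N$ (nonnegative entries summing to $1$). $\mathcal C(\mathbf p,\mathbf q)$: nonnegative $m\times n$ matrices with row sums $p_i$ and column sums $q_j$; $\mathcal C_e(\mathbf p,\mathbf q)$: its extreme points; $V(P)=\{(i,j):p_{i,j}\neq0\}$. $\mathscr C(\mathbf p,\mathbf q)$: the set of $P\in\mathcal C(\mathbf p,\mathbf q)$ with $V(P)\subset T$ for some tree $T\subset[m]\times[n]$ with $|T|=m+n-1$ (graph notions: distinct points adjacent iff they share a row or column; a circuit is a cyclic sequence of $s\ge4$ pairwise distinct points $v_k=(i_k,j_k)$ with, indices mod $s$, $v_k,v_{k+1}$ adjacent and $(i_{k+2}-i_k)(j_{k+2}-j_k)\ne0$; a tree is a connected subset with no circuit). $\phi(i)=(t,r)$ for $i=(t-1)n+r$, $t\in[m]$, $r\in[n]$. For $S=\{i_1<\dots<i_{m+n-1}\}$, the structure matrix $\mathfrak A(S)=(a_{s,k})$ is the $(m+n-1)\times(m+n-1)$ matrix with, for $\phi(i_k)=(t,r)$: $a_{s,k}=1$ if $s=t<m$; $a_{s,k}=1$ if $s=m$; $a_{s,k}=1$ if $s=m+r<m+n$; $a_{s,k}=0$ otherwise. Rényi entropy $\frac1{1-\alpha}\log\sum p_{i,j}^\alpha$ and Tsallis entropy $\frac1{1-\alpha}(\sum p_{i,j}^\alpha-1)$, $\alpha\ge0$, $\alpha\ne1$. *)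

(* Defs.v *)
From HB Require Import structures.
From mathcomp Require Import all_boot all_order all_algebra.
From mathcomp Require Import reals.
Set Implicit Arguments. Unset Strict Implicit. Unset Printing Implicit Defensive.
Import Order.TTheory GRing.Theory Num.Theory.
Local Open Scope ring_scope.

Section TP.
Variable R : realType.

Definition probvec (N : nat) (v : 'I_N -> R) : Prop :=
  (forall i, 0 <= v i) /\ \sum_(i < N) v i = 1.

Variables m n : nat.

Definition transport (p : 'I_m -> R) (q : 'I_n -> R) (P : 'M[R]_(m, n)) : Prop :=
  (forall i j, 0 <= P i j) /\
  (forall i, \sum_(j < n) P i j = p i) /\
  (forall j, \sum_(i < m) P i j = q j).

Definition extreme_transport p q (P : 'M[R]_(m, n)) : Prop :=
  transport p q P /\
  forall A B t, transport p q A -> transport p q B -> 0 < t -> t < 1 ->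
    P = t *: A + (1 - t) *: B -> A = B.

Definition point := ('I_m * 'I_n)%type.

Definition supp (P : 'M[R]_(m, n)) : {set point} :=
  [set v : point | P v.1 v.2 != 0].

Definition adjacent (a b : point) : bool :=
  (a != b) && ((a.1 == b.1) || (a.2 == b.2)).

(* a circuit: cyclic sequence v_0..v_{s-1} of s >= 4 pairwise distinct points
   (indices mod s) with v_k, v_{k+1} adjacent and
   (i_{k+2}-i_k)(j_{k+2}-j_k) <> 0, i.e. i_{k+2} <> i_k and j_{k+2} <> j_k.
   x0 is only a default value for nth (irrelevant since indices are < size c). *)
Definition is_circuit (x0 : point) (c : seq point) : Prop :=
  (4 <= size c)%N /\ uniq c /\
  forall k, (k < size c)%N ->
    adjacent (nth x0 c k) (nth x0 c ((k + 1) %% size c)) /\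
    (nth x0 c ((k + 2) %% size c)).1 != (nth x0 c k).1 /\
    (nth x0 c ((k + 2) %% size c)).2 != (nth x0 c k).2.

Definition connected_set (T : {set point}) : Prop :=
  forall a b, a \in T -> b \in T ->
    connect [rel u v | [&& u \in T, v \in T & adjacent u v]] a b.

Definition is_tree (T : {set point}) : Prop :=
  connected_set T /\
  ~ (exists (x0 : point) (c : seq point), is_circuit x0 c /\ all (mem T) c).

Definition tree_transport p q (P : 'M[R]_(m, n)) : Prop :=
  transport p q P /\
  exists T : {set point}, is_tree T /\ #|T| = (m + n - 1)%N /\ supp P \subset T.

(* phi (0-based): i = t*n + r  |->  (t, r) with t = i %/ n, r = i %% n *)

Definition sth (S : {set 'I_(m * n)}) (k : nat) : nat :=
  nth 0%N (sort leq [seq val x | x <- enum S]) k.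

Definition struct_mx (S : {set 'I_(m * n)}) : 'M[R]_(m + n - 1) :=
  \matrix_(s, k)
    let i := sth S k in
    let t := (i %/ n)%N in
    let r := (i %% n)%N in
    if [|| (s == t :> nat) && (t < m - 1)%N, (s == (m - 1)%N :> nat)
        | (s == (m + r)%N :> nat) && (r < n - 1)%N] then 1 else 0.

Definition oget (N : nat) (f : 'I_N -> R) (i : nat) : R :=
  oapp f 0 (insub i).

Definition yvec (p : 'I_m -> R) (q : 'I_n -> R) : 'cV[R]_(m + n - 1) :=
  \col_s (if (s < m - 1)%N then oget p s
          else if (s == (m - 1)%N :> nat) then 1 else oget q (s - m)%N).

Definition xvec p q (S : {set 'I_(m * n)}) : 'cV[R]_(m + n - 1) :=
  invmx (struct_mx S) *m yvec p q.

Definition admissible p q (S : {set 'I_(m * n)}) : Prop :=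
  #|S| = (m + n - 1)%N /\ \det (struct_mx S) != 0 /\
  probvec (fun k => xvec p q S k ord0).

Definition PS p q (S : {set 'I_(m * n)}) : 'M[R]_(m, n) :=
  \matrix_(i, j) \sum_(k < m + n - 1 | (sth S k %/ n == i)%N && (sth S k %% n == j)%N)
     xvec p q S k ord0.

Definition strictly_concave_on p q (H : 'M[R]_(m, n) -> R) : Prop :=
  forall A B t, transport p q A -> transport p q B -> A != B -> 0 < t -> t < 1 ->
    t * H A + (1 - t) * H B < H (t *: A + (1 - t) *: B).

End TP.

(* Main.v *)
Require Import Defs.
From HB Require Import structures.
From mathcomp Require Import all_boot all_order all_algebra.
From mathcomp Require Import reals.
From mathcomp Require Import zify ring lra.
From Stdlib Require Import Classical.
Import Order.TTheory GRing.Theory Num.Theory.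
Local Open Scope ring_scope.
Set Implicit Arguments. Unset Strict Implicit. Unset Printing Implicit Defensive.

Section Main.
Variable R : realType.
Variables m n : nat.
Hypothesis m2 : (2 <= m)%N.
Hypothesis n2 : (2 <= n)%N.

Local Notation N := (m + n - 1)%N.
Local Notation cell := (point m n).
Implicit Types (w : 'M[R]_(m,n)).

Definition rsum w (i : 'I_m) := \sum_(j < n) w i j.
Definition csum w (j : 'I_n) := \sum_(i < m) w i j.
Definition zm w := (forall i, rsum w i = 0) /\ (forall j, csum w j = 0).
Definition free (T : {set cell}) := forall w, supp w \subset T -> zm w -> w = 0.

Definition cnd (s i j : nat) : bool :=
  [|| (s == i) && (i < m - 1)%N, (s == (m - 1)%N) | (s == (m + j)%N) && (j < n - 1)%N].
Definition acol (i j : nat) : 'cV[R]_N := \col_s (if cnd s i j then 1 else 0).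
Definition acolc (c : cell) := acol c.1 c.2.
Definition V w : 'cV[R]_N := \sum_(c : cell) w c.1 c.2 *: acolc c.

Lemma structE S (s k : 'I_N) :
  struct_mx R S s k = acol (@sth m n S k %/ n) (@sth m n S k %% n) s 0.
Proof. by rewrite !mxE. Qed.

Lemma sum_pick K (f : 'I_K -> R) a :
  \sum_(i < K) ((i : nat) == a)%:R * f i = oget f a.
Proof.
rewrite /oget; case: insubP => [i0 _ <-|Ha] /=.
  rewrite (bigD1 i0) //= eqxx mul1r big1 ?addr0 // => i Hi.
  by rewrite (_ : (i : nat) == i0 = false) ?mul0r //; apply/negbTE.
rewrite big1 // => i _; case: eqP => [E|]; last by rewrite mul0r.
by move/negP: Ha; rewrite -E ltn_ord.
Qed.

Lemma VE w (s : 'I_N) :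
  V w s 0 = \sum_(i < m) \sum_(j < n) w i j * (cnd s i j)%:R.
Proof.
rewrite summxE pair_bigA /=; apply: eq_bigr => c _.
by rewrite !mxE; case: (cnd _ _ _).
Qed.

Lemma oget_eq K (f : 'I_K -> R) (i : 'I_K) : oget f i = f i.
Proof. by rewrite /oget valK. Qed.

Lemma Vlo w (s : 'I_N) : (s < m - 1)%N -> V w s 0 = oget (rsum w) s.
Proof.
move=> Hs; rewrite VE -sum_pick; apply: eq_bigr => i _.
rewrite /rsum mulr_sumr; apply: eq_bigr => j _.
have -> : cnd s i j = ((i : nat) == s).
  rewrite /cnd; case: (eqVneq (i : nat) s) => [E|H] /=.
    by rewrite E Hs.
  have -> : ((s : nat) == (m - 1)%N) = false by apply/negbTE; lia.
  by have -> : ((s : nat) == (m + j)%N) = false by apply/negbTE; lia.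
by rewrite mulrC.
Qed.

Lemma Vmid w (s : 'I_N) : (s : nat) = (m - 1)%N -> V w s 0 = \sum_(i < m) rsum w i.
Proof.
move=> Hs; rewrite VE; apply: eq_bigr => i _; rewrite /rsum; apply: eq_bigr => j _.
by rewrite /cnd Hs eqxx orbT mulr1.
Qed.

Lemma Vhi w (s : 'I_N) : (m <= s)%N -> V w s 0 = oget (csum w) (s - m).
Proof.
move=> Hs; rewrite VE exchange_big -sum_pick; apply: eq_bigr => j _.
rewrite /csum mulr_sumr; apply: eq_bigr => i _.
have -> : cnd s i j = ((j : nat) == (s - m)%N).
  rewrite /cnd.
  have -> : ((s : nat) == i) = false by apply/negbTE; have := ltn_ord i; lia.
  have -> : ((s : nat) == (m - 1)%N) = false by apply/negbTE; lia.
  have := ltn_ord s; have := ltn_ord j.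
  case: (eqVneq (j : nat) (s - m)%N) => H /=.
    by move=> *; apply/andP; split; apply/eqP || idtac; lia.
  by move=> *; apply/negbTE/nandP; left; apply/eqP; lia.
by rewrite mulrC.
Qed.

Lemma sum_last K (f g : 'I_K -> R) :
  \sum_i f i = \sum_i g i -> (forall i : 'I_K, (i < K.-1)%N -> f i = g i) ->
  forall i, f i = g i.
Proof.
move=> Hs Hl i; case: (ltnP i K.-1) => Hi; first exact: Hl.
move: Hs; rewrite (bigD1 i) //= (bigD1 i (P := predT)) //=.
rewrite (eq_bigr g) => [|l Hl2]; first by move/addIr.
apply: Hl; have := ltn_ord l; have := ltn_ord i.
have : (l : nat) != i by move: Hl2; rewrite /= ?andbT. move=> /eqP H1 *; lia.
Qed.

Definition ordN (a : nat) (H : (a < N)%N) : 'I_N := Ordinal H.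

Lemma csum_tot w : \sum_j csum w j = \sum_i rsum w i.
Proof. by rewrite /csum /rsum exchange_big. Qed.

Lemma Vmarg w w' : V w = V w' ->
  (forall i, rsum w i = rsum w' i) /\ (forall j, csum w j = csum w' j).
Proof.
move=> HV.
have Htot : \sum_i rsum w i = \sum_i rsum w' i.
  have H : (m - 1 < N)%N by lia.
  by rewrite -(Vmid w (s := ordN H)) // -(Vmid w' (s := ordN H)) // HV.
split.
  apply: sum_last => // i Hi.
  have H : (i < N)%N by have := ltn_ord i; lia.
  have Hi' : ((ordN H : nat) < m - 1)%N by rewrite /=; have := ltn_ord i; lia.
  by move: (Vlo w Hi') (Vlo w' Hi'); rewrite HV /= !oget_eq => -> ->.
apply: sum_last; first by rewrite !csum_tot.
move=> j Hj.
have H : (m + j < N)%N by have := ltn_ord j; lia.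
have Hi' : (m <= (ordN H : nat))%N by rewrite /=; lia.
move: (Vhi w Hi') (Vhi w' Hi'); rewrite HV /=.
have -> : (m + j - m)%N = j by lia.
by rewrite !oget_eq => -> ->.
Qed.

Lemma oget_ext K (f g : 'I_K -> R) a : (forall i, f i = g i) -> oget f a = oget g a.
Proof. by move=> H; rewrite /oget; case: insub => //= i. Qed.

Lemma Vext w w' : (forall i, rsum w i = rsum w' i) -> (forall j, csum w j = csum w' j) ->
  V w = V w'.
Proof.
move=> Hr Hc; apply/matrixP => s k; rewrite (ord1 k).
case: (ltnP s (m - 1)) => H1; first by rewrite !Vlo //; apply: oget_ext.
case: (eqVneq (s : nat) (m - 1)%N) => H2.
  by rewrite !Vmid //; apply: eq_bigr.
have H3 : (m <= s)%N by lia.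
by rewrite !Vhi //; apply: oget_ext.
Qed.

Lemma rsum0 i : rsum (0 : 'M[R]_(m,n)) i = 0.
Proof. by rewrite /rsum big1 // => j _; rewrite mxE. Qed.
Lemma csum0 j : csum (0 : 'M[R]_(m,n)) j = 0.
Proof. by rewrite /csum big1 // => i _; rewrite mxE. Qed.

Lemma V0 : V 0 = 0.
Proof. by rewrite /V big1 // => c _; rewrite mxE scale0r. Qed.

Lemma Vzm w : V w = 0 <-> zm w.
Proof.
split.
  rewrite -V0 => /Vmarg [H1 H2]; split => [i|j]; by rewrite ?H1 ?H2 ?rsum0 ?csum0.
move=> [H1 H2]; rewrite -V0; apply: Vext => [i|j]; by rewrite ?H1 ?H2 ?rsum0 ?csum0.
Qed.

Lemma Vy w (p : 'I_m -> R) (q : 'I_n -> R) : \sum_i p i = 1 ->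
  (forall i, rsum w i = p i) -> (forall j, csum w j = q j) -> V w = yvec p q.
Proof.
move=> Hp Hr Hc; apply/matrixP => s k; rewrite (ord1 k) mxE.
case: (ltnP s (m - 1)) => H1; first by rewrite !Vlo //; apply: oget_ext.
case: (eqVneq (s : nat) (m - 1)%N) => H2.
  by rewrite !Vmid // -Hp; apply: eq_bigr.
have H3 : (m <= s)%N by lia.
by rewrite !Vhi //; apply: oget_ext.
Qed.

Definition P0 (p : 'I_m -> R) (q : 'I_n -> R) : 'M[R]_(m,n) := \matrix_(i,j) (p i * q j).

Lemma Vy_inv w (p : 'I_m -> R) (q : 'I_n -> R) : \sum_i p i = 1 -> \sum_j q j = 1 ->
  V w = yvec p q -> (forall i, rsum w i = p i) /\ (forall j, csum w j = q j).
Proof.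
move=> Hp Hq HV.
have Hr : forall i, rsum (P0 p q) i = p i.
  move=> i; rewrite /rsum (eq_bigr (fun j => p i * q j)) => [|j _]; last by rewrite mxE.
  by rewrite -mulr_sumr Hq mulr1.
have Hc : forall j, csum (P0 p q) j = q j.
  move=> j; rewrite /csum (eq_bigr (fun i => p i * q j)) => [|i _]; last by rewrite mxE.
  by rewrite -mulr_suml Hp mul1r.
have := Vy Hp Hr Hc; rewrite -HV => /esym /Vmarg [H1 H2].
by split => [i|j]; rewrite ?H1 ?H2.
Qed.

Definition Wg (I : finType) (al : I -> R) (ph : I -> cell) : 'M[R]_(m,n) :=
  \matrix_(i,j) \sum_l al l * (ph l == (i,j))%:R.

Lemma rsum_Wg (I : finType) (al : I -> R) ph i :
  rsum (Wg al ph) i = \sum_l al l * ((ph l).1 == i)%:R.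
Proof.
rewrite /rsum (eq_bigr (fun j => \sum_l al l * (ph l == (i,j))%:R)) => [|j _]; last by rewrite mxE.
rewrite exchange_big; apply: eq_bigr => l _. rewrite -mulr_sumr; congr (_ * _).
case: (ph l) => a b /=; case: (eqVneq a i) => [->|H].
  by rewrite (bigD1 b) //= eqxx big1 ?addr0 // => j Hj; rewrite xpair_eqE eqxx /= eq_sym (negbTE Hj).
by rewrite big1 // => j _; rewrite xpair_eqE (negbTE H).
Qed.

Lemma csum_Wg (I : finType) (al : I -> R) ph j :
  csum (Wg al ph) j = \sum_l al l * ((ph l).2 == j)%:R.
Proof.
rewrite /csum (eq_bigr (fun i => \sum_l al l * (ph l == (i,j))%:R)) => [|i _]; last by rewrite mxE.
rewrite exchange_big; apply: eq_bigr => l _. rewrite -mulr_sumr; congr (_ * _).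
case: (ph l) => a b /=; case: (eqVneq b j) => [->|H].
  by rewrite (bigD1 a) //= eqxx big1 ?addr0 // => i Hi; rewrite xpair_eqE eq_sym (negbTE Hi).
by rewrite big1 // => i _; rewrite xpair_eqE (negbTE H) andbF.
Qed.

Lemma V_Wg (I : finType) (al : I -> R) ph :
  V (Wg al ph) = \sum_l al l *: acolc (ph l).
Proof.
rewrite /V (eq_bigr (fun c => (\sum_l al l * (ph l == c)%:R) *: acolc c)) => [|c _]; last first.
  by rewrite mxE -surjective_pairing.
under eq_bigr do rewrite scaler_suml.
rewrite exchange_big; apply: eq_bigr => l _.
rewrite (bigD1 (ph l)) //= eqxx mulr1 big1 ?addr0 // => c Hc.
by rewrite eq_sym (negbTE Hc) mulr0 scale0r.
Qed.

Lemma Wg_inj (I : finType) (al : I -> R) ph l : injective ph ->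
  Wg al ph (ph l).1 (ph l).2 = al l.
Proof.
move=> Hi; rewrite mxE (eq_bigr (fun l' => al l' * (ph l' == ph l)%:R)) => [|l' _]; last first.
  by rewrite -surjective_pairing.
rewrite (bigD1 l) //= eqxx mulr1 big1 ?addr0 // => l' Hl.
by rewrite (inj_eq Hi) (negbTE Hl) mulr0.
Qed.

Lemma Wg_supp (I : finType) (al : I -> R) ph i j : Wg al ph i j != 0 -> exists l, ph l = (i,j).
Proof.
rewrite mxE => H; case: (pickP (fun l => ph l == (i,j))) => [l /eqP|Hn]; first by exists l.
by move: H; rewrite big1 ?eqxx // => l _; rewrite Hn mulr0.
Qed.

Lemma condE (s i j : nat) : ((cnd s i j)%:R : R) =
  ((s == i) && (i < m - 1)%N)%:R + (s == (m - 1)%N)%:R + ((s == (m + j)%N) && (j < n - 1)%N)%:R.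
Proof.
rewrite /cnd; case: (eqVneq s i) => [->|H1] /=; case: (ltnP i (m - 1)) => H2 /=;
  case: (eqVneq _ (m - 1)%N) => H3 /=; case: (eqVneq _ (m + j)%N) => H4 /=;
  case: (ltnP j (n - 1)) => H5 /=; rewrite ?add0r ?addr0 //; lia.
Qed.

Definition gdot (g : 'rV[R]_N) (i j : nat) := (g *m acol i j) 0 0.

Lemma sum_pick2 (g : 'rV[R]_N) (a : nat) (b : bool) :
  \sum_(s < N) g 0 s * (((s : nat) == a) && b)%:R = if b then oget (g 0) a else 0.
Proof.
case: b; last by rewrite big1 // => s _; rewrite andbF mulr0.
by rewrite -sum_pick; apply: eq_bigr => s _; rewrite andbT mulrC.
Qed.

Lemma gdotE g i j : gdot g i j =
  (if (i < m - 1)%N then oget (g 0) i else 0) + oget (g 0) (m - 1) +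
  (if (j < n - 1)%N then oget (g 0) (m + j) else 0).
Proof.
rewrite /gdot mxE (eq_bigr (fun s => g 0 s * (((s : nat) == i) && (i < m - 1)%N)%:R
   + g 0 s * ((s : nat) == (m - 1)%N)%:R + g 0 s * (((s : nat) == (m + j)%N) && (j < n - 1)%N)%:R))
  => [|s _]; last first.
  by rewrite !mxE -!mulrDr -condE; case: cnd.
rewrite !big_split /= !sum_pick2; congr (_ + _ + _).
by rewrite -sum_pick; apply: eq_bigr => s _; rewrite mulrC.
Qed.

Lemma gdot_zero g : (forall i j, (i < m)%N -> (j < n)%N -> gdot g i j = 0) -> g = 0.
Proof.
move=> H.
have Hm : oget (g 0) (m - 1) = 0.
  by have := H (m - 1)%N (n - 1)%N; rewrite gdotE !ltnn addr0 add0r; apply; lia.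
apply/matrixP => a s; rewrite (ord1 a) mxE -[g 0 s]oget_eq.
case: (ltnP s (m - 1)) => H1.
  have := H s (n - 1)%N; rewrite gdotE H1 Hm ltnn !addr0; apply; lia.
case: (eqVneq (s : nat) (m - 1)%N) => [->//|H2].
have := H (m - 1)%N (s - m)%N; rewrite gdotE ltnn Hm add0r.
have -> : (s - m < n - 1)%N by have := ltn_ord s; lia.
have -> : (m + (s - m))%N = s by lia.
rewrite add0r; apply; have := ltn_ord s; lia.
Qed.

Definition gof (u v : nat -> R) : 'rV[R]_N :=
  \row_s (if (s < m - 1)%N then u s - u (m - 1)%N
          else if (s == (m - 1)%N :> nat) then u (m - 1)%N + v (n - 1)%N
          else v (s - m)%N - v (n - 1)%N).

Lemma oget_gof u v a : (a < N)%N -> oget (gof u v 0) a =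
  (if (a < m - 1)%N then u a - u (m - 1)%N
   else if (a == (m - 1)%N) then u (m - 1)%N + v (n - 1)%N
   else v (a - m)%N - v (n - 1)%N).
Proof. by move=> Ha; rewrite /oget insubT /= mxE. Qed.

Lemma gdot_gof u v i j : (i < m)%N -> (j < n)%N -> gdot (gof u v) i j = u i + v j.
Proof.
move=> Hi Hj.
have E1 : oget (gof u v 0) (m - 1) = u (m - 1)%N + v (n - 1)%N.
  by rewrite oget_gof ?ltnn ?eqxx //; lia.
have E2 : (i < m - 1)%N -> oget (gof u v 0) i = u i - u (m - 1)%N.
  by move=> H; rewrite oget_gof ?H //; lia.
have E3 : (j < n - 1)%N -> oget (gof u v 0) (m + j) = v j - v (n - 1)%N.
  move=> H; rewrite oget_gof; last by lia.
  have -> : (m + j < m - 1)%N = false by lia.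
  have -> : (m + j == m - 1)%N = false by apply/negbTE; lia.
  by have -> : (m + j - m)%N = j by lia.
rewrite gdotE E1.
case: (ltnP i (m - 1)) => H1; case: (ltnP j (n - 1)) => H2.
- by rewrite E2 // E3 //; ring.
- have -> : j = (n - 1)%N by lia.
  by rewrite E2 // addr0; ring.
- have -> : i = (m - 1)%N by lia.
  by rewrite E3 // add0r; ring.
- have -> : i = (m - 1)%N by lia.
  have -> : j = (n - 1)%N by lia.
  by rewrite add0r addr0.
Qed.
Implicit Types (S : {set 'I_(m * n)}).

Lemma mn_gt0 : (0 < m * n)%N.
Proof. by rewrite muln_gt0; apply/andP; split; lia. Qed.

Definition sl (S : {set 'I_(m * n)}) := sort leq [seq val x | x <- enum S].

Lemma sthE S k : @sth m n S k = nth 0%N (sl S) k.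
Proof. by []. Qed.

Lemma size_sl S : size (sl S) = #|S|.
Proof. by rewrite /sl size_sort size_map cardE. Qed.

Lemma uniq_sl S : uniq (sl S).
Proof. by rewrite /sl sort_uniq map_inj_uniq ?enum_uniq //; apply: val_inj. Qed.

Lemma mem_sl S (a : nat) : (a \in sl S) = (if insub a is Some x then x \in S else false).
Proof.
rewrite /sl mem_sort; case: insubP => [x _ <-|Ha].
  by rewrite (mem_map val_inj) mem_enum.
apply/negbTE/mapP => [[x _ E]]; move/negP: Ha; apply; rewrite E ltn_ord //.
Qed.

Lemma sth_lt S k : (@sth m n S k < m * n)%N.
Proof.
rewrite sthE; case: (ltnP k (size (sl S))) => Hk; last by rewrite nth_default // mn_gt0.
have := mem_nth 0%N Hk; rewrite mem_sl; case: insubP => // x _ <- _; exact: ltn_ord.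
Qed.

Lemma sth_in S k : (k < #|S|)%N -> Sub (@sth m n S k) (sth_lt S k) \in S.
Proof.
rewrite -size_sl => Hk; have := mem_nth 0%N Hk.
rewrite mem_sl -sthE; case: insubP => [y _ Ey Hy|]; last by rewrite sth_lt.
by have -> : Sub (@sth m n S k) (sth_lt S k) = y by apply: val_inj; rewrite /= Ey.
Qed.

Lemma sth_inj S k1 k2 : (k1 < #|S|)%N -> (k2 < #|S|)%N -> @sth m n S k1 = @sth m n S k2 -> k1 = k2.
Proof.
rewrite -size_sl !sthE => H1 H2 E; apply/eqP; rewrite -(nth_uniq 0%N H1 H2 (uniq_sl S)) E //.
Qed.

Lemma sth_surj S (x : 'I_(m * n)) : x \in S -> exists2 k, (k < #|S|)%N & @sth m n S k = x.
Proof.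
move=> Hx; have : (val x \in sl S) by rewrite mem_sl valK.
move=> H; exists (index (val x) (sl S)); first by rewrite -size_sl index_mem.
by rewrite sthE nth_index.
Qed.

Definition i00 : 'I_m := Ordinal (ltn_trans (ltnSn 0) m2).
Definition j00 : 'I_n := Ordinal (ltn_trans (ltnSn 0) n2).

Definition decn (a : nat) : cell := (insubd i00 (a %/ n)%N, insubd j00 (a %% n)%N).

Lemma decn1 a : (a < m * n)%N -> val (decn a).1 = (a %/ n)%N.
Proof.
move=> Ha; have n0 : (0 < n)%N by apply: ltn_trans n2.
by rewrite /= insubdK // unfold_in /= ltn_divLR.
Qed.
Lemma decn2 a : val (decn a).2 = (a %% n)%N.
Proof.
have n0 : (0 < n)%N by apply: ltn_trans n2.
by rewrite /= insubdK // unfold_in /= ltn_mod.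
Qed.

Lemma enc_lt (c : cell) : (c.1 * n + c.2 < m * n)%N.
Proof.
have H1 := ltn_ord c.1; have H2 := ltn_ord c.2.
have : (c.1 * n + c.2 < c.1.+1 * n)%N by rewrite mulSn addnC ltn_add2r.
move=> H; apply: (leq_trans H); rewrite leq_mul2r H1 orbT //.
Qed.

Definition enc (c : cell) : 'I_(m * n) := Ordinal (enc_lt c).

Lemma decn_enc c : decn (enc c) = c.
Proof.
case: c => i j; congr pair; apply: val_inj.
  by rewrite decn1 ?enc_lt //= divnMDl ?divn_small ?addn0 //; lia.
by rewrite decn2 /= modnMDl modn_small.
Qed.

Lemma enc_decn (x : 'I_(m * n)) : enc (decn x) = x.
Proof.
apply: val_inj => /=; rewrite decn1 // decn2; rewrite -divn_eq //.
Qed.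

Lemma enc_decn' a : (a < m * n)%N -> val (enc (decn a)) = a.
Proof. by move=> Ha; rewrite /= decn1 // decn2 -divn_eq. Qed.

Lemma enc_inj : injective enc.
Proof. by move=> c1 c2 E; rewrite -(decn_enc c1) E decn_enc. Qed.

Definition decS (S : {set 'I_(m * n)}) : {set cell} := [set c | enc c \in S].
Definition encS (T : {set cell}) : {set 'I_(m * n)} := [set enc c | c in T].

Lemma decS_encS T : decS (encS T) = T.
Proof. by apply/setP => c; rewrite inE mem_imset //; apply: enc_inj. Qed.

Lemma card_encS T : #|encS T| = #|T|.
Proof. by rewrite card_imset //; apply: enc_inj. Qed.

Definition phS S (k : 'I_N) : cell := decn (@sth m n S k).

Lemma phS_in S k : #|S| = N -> phS S k \in decS S.
Proof.
move=> HS; rewrite inE.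
have -> : enc (phS S k) = Sub (@sth m n S k) (sth_lt S k).
  by apply: val_inj; rewrite /phS enc_decn' ?sth_lt.
by apply: sth_in; rewrite HS ltn_ord.
Qed.

Lemma phS_inj S : #|S| = N -> injective (phS S).
Proof.
move=> HS k1 k2 E; apply: val_inj; apply: (sth_inj (S := S)); rewrite ?HS ?ltn_ord //.
have := congr1 (fun c => val (enc c)) E => /=.
by rewrite /phS !decn1 ?sth_lt // decn2 decn2 -!divn_eq.
Qed.

Lemma phS_surj S c : #|S| = N -> c \in decS S -> exists k, phS S k = c.
Proof.
move=> HS; rewrite inE => /sth_surj [k Hk E]; rewrite HS in Hk.
exists (Ordinal Hk); rewrite /phS /= E; exact: decn_enc.
Qed.

Lemma phS1 S k : val (phS S k).1 = (@sth m n S k %/ n)%N.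
Proof. by rewrite decn1 ?sth_lt. Qed.
Lemma phS2 S k : val (phS S k).2 = (@sth m n S k %% n)%N.
Proof. by rewrite decn2. Qed.

Definition WS S (x : 'cV[R]_N) : 'M[R]_(m, n) :=
  \matrix_(i, j) \sum_(k < N | (@sth m n S k %/ n == i)%N && (@sth m n S k %% n == j)%N) x k ord0.

Lemma WS_Wg S x : WS S x = Wg (fun k => x k ord0) (phS S).
Proof.
apply/matrixP => i j; rewrite !mxE big_mkcond; apply: eq_bigr => k _.
rewrite xpair_eqE -!val_eqE phS1 phS2.
by case: (_ && _); rewrite ?mulr1 ?mulr0.
Qed.

Lemma struct_V S x : struct_mx R S *m x = V (WS S x).
Proof.
rewrite WS_Wg V_Wg; apply/matrixP => s a; rewrite (ord1 a) mxE summxE.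
apply: eq_bigr => k _; rewrite structE !mxE /acolc phS1 phS2 mulrC.
by congr (_ * _); rewrite !mxE.
Qed.

Lemma WS0 S : WS S 0 = 0.
Proof. by apply/matrixP => i j; rewrite !mxE big1 // => k _; rewrite mxE. Qed.

Lemma supp_WS S x : #|S| = N -> supp (WS S x) \subset decS S.
Proof.
move=> HS; apply/subsetP => c; rewrite inE WS_Wg => /Wg_supp [k Ek].
by rewrite -surjective_pairing in Ek; rewrite -Ek phS_in.
Qed.

Lemma det_free S : #|S| = N -> \det (struct_mx R S) != 0 -> free (decS S).
Proof.
move=> HS Hd w Hsup Hz.
have Hu : struct_mx R S \in unitmx by rewrite unitmxE unitfE.
pose x : 'cV[R]_N := \col_k w (phS S k).1 (phS S k).2.
have Hw : WS S x = w.
  rewrite WS_Wg; apply/matrixP => i j.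
  case: (boolP ((i, j) \in decS S)) => Hin.
    have [k Ek] := phS_surj HS Hin.
    have := Wg_inj (fun k => x k ord0) k (phS_inj HS).
    by rewrite Ek /= => ->; rewrite /x mxE Ek.
  have -> : w i j = 0.
    apply/eqP; apply: contraNT Hin => H.
    by apply: (subsetP Hsup); rewrite inE.
  apply/eqP; apply: contraNT Hin => /Wg_supp [k <-]; exact: phS_in.
have Ax : struct_mx R S *m x = 0 by rewrite struct_V Hw; apply/Vzm.
have : x = 0 by rewrite -(mulKmx Hu x) Ax mulmx0.
by move=> Hx; rewrite -Hw Hx WS0.
Qed.

Lemma free_det S : #|S| = N -> free (decS S) -> \det (struct_mx R S) != 0.
Proof.
move=> HS Hf; apply/negP => /eqP Hd.
have : \det (struct_mx R S)^T == 0 by rewrite det_tr Hd.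
case/det0P => v Hv0 Hv.
pose x := v^T.
have Ax : struct_mx R S *m x = 0.
  by rewrite /x -[struct_mx R S]trmxK -trmx_mul Hv trmx0.
have Hw := Hf (WS S x) (supp_WS x HS).
have Hz : zm (WS S x) by apply/Vzm; rewrite -struct_V.
have Hx : x = 0.
  apply/matrixP => k a; rewrite (ord1 a) [RHS]mxE.
  have := Wg_inj (fun k => x k ord0) k (phS_inj HS).
  by rewrite -WS_Wg Hw // mxE => <-.
by move/eqP: Hv0; apply; rewrite -[v]trmxK -/x Hx trmx0.
Qed.

Lemma F2 S (u v : nat -> R) : #|S| = N -> \det (struct_mx R S) != 0 ->
  (forall c, c \in decS S -> u c.1 + v c.2 = 0) ->
  forall i j, (i < m)%N -> (j < n)%N -> u i + v j = 0.
Proof.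
move=> HS Hd H i j Hi Hj.
have Hu : struct_mx R S \in unitmx by rewrite unitmxE unitfE.
have Hg : gof u v *m struct_mx R S = 0.
  apply/matrixP => a k; rewrite (ord1 a) [RHS]mxE.
  transitivity (gdot (gof u v) (phS S k).1 (phS S k).2).
    by rewrite /gdot !mxE phS1 phS2; apply: eq_bigr => s _; rewrite structE.
  by rewrite gdot_gof // H ?phS_in.
have : gof u v = 0 by rewrite -(mulmxK Hu (gof u v)) Hg mul0mx.
move=> Hg0; rewrite -gdot_gof // Hg0 /gdot mul0mx mxE //.
Qed.
Implicit Types (T : {set cell}).

Lemma detcol0 K (A : 'M[R]_K) j0 : (forall i, A i j0 = 0) -> \det A = 0.
Proof.
move=> H; rewrite -det_tr (expand_det_row _ j0) big1 // => i _.
by rewrite mxE H mul0r.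
Qed.

Lemma G1 K (f : 'I_K -> 'cV[R]_N) : (K < N)%N ->
  exists2 g : 'rV[R]_N, g != 0 & forall l, g *m f l = 0.
Proof.
move=> HK.
pose M : 'M[R]_N := \matrix_(s, l) (if insub (val l) is Some l' then f l' s 0 else 0).
have Hl0 : (N.-1 < N)%N by lia.
have : \det M == 0.
  apply/eqP; apply: (detcol0 (j0 := Ordinal Hl0)) => i.
  by rewrite mxE /= insubF //; apply/negbTE; rewrite -leqNgt; lia.
case/det0P => v Hv Hv0; exists v => // l.
apply/matrixP => a b; rewrite (ord1 a) (ord1 b) [RHS]mxE.
have HlN : (l < N)%N by have := ltn_ord l; lia.
have E := congr1 (fun A : 'rV[R]_N => A ord0 (Ordinal HlN)) Hv0; rewrite /= [RHS]mxE in E.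
apply: (eq_trans _ E); rewrite !mxE; apply: eq_bigr => s _; rewrite mxE /= valK //.
Qed.

Lemma G2 K (f : 'I_K -> 'cV[R]_N) : (N < K)%N ->
  exists a : 'I_K -> R, (exists l, a l != 0) /\ \sum_l a l *: f l = 0.
Proof.
move=> HK.
pose M : 'M[R]_K := \matrix_(l, s) (if insub (val s) is Some s' then f l s' 0 else 0).
have : \det M == 0.
  apply/eqP; apply: (detcol0 (j0 := Ordinal HK)) => i.
  by rewrite mxE /= insubF // ltnn.
case/det0P => v Hv Hv0; exists (fun l => v 0 l); split.
  apply/existsP; apply: contraNT Hv => /existsPn H.
  by apply/eqP/matrixP => a l; rewrite (ord1 a) mxE; apply/eqP; rewrite -[_ == 0]negbK H.
apply/matrixP => s b; rewrite (ord1 b) [RHS]mxE summxE.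
have HsK : (s < K)%N by have := ltn_ord s; lia.
have E := congr1 (fun A : 'rV[R]_K => A ord0 (Ordinal HsK)) Hv0; rewrite /= [RHS]mxE in E.
apply: (eq_trans _ E); rewrite mxE; apply: eq_bigr => l _; rewrite !mxE /= valK //.
Qed.

Lemma free_sub T T' : T \subset T' -> free T' -> free T.
Proof. by move=> H Hf w Hs Hz; apply: Hf => //; apply: subset_trans H. Qed.

Lemma free_card T : free T -> (#|T| <= N)%N.
Proof.
move=> Hf; rewrite leqNgt; apply/negP => HT.
have [a [[l Hl] Ha]] := G2 (fun l : 'I_#|T| => acolc (enum_val l)) HT.
pose w := Wg a (fun l => enum_val l).
have Hz : zm w by apply/Vzm; rewrite /w V_Wg.
have Hs : supp w \subset T.
  apply/subsetP => c; rewrite inE => /Wg_supp [l' El].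
  by rewrite -surjective_pairing in El; rewrite -El; exact: enum_valP.
have := Wg_inj a l (@enum_val_inj _ (mem T)); rewrite -/w (Hf w Hs Hz) mxE => H.
by move: Hl; rewrite -H eqxx.
Qed.

Lemma zm_gdot w g : zm w -> \sum_i \sum_j w i j * gdot g i j = 0.
Proof.
move=> [Hr Hc].
under eq_bigr do under eq_bigr do rewrite gdotE mulrDr.
rewrite (eq_bigr (fun i => \sum_j w i j * ((if (i < m - 1)%N then oget (g 0) i else 0) + oget (g 0) (m - 1))
   + \sum_j w i j * (if (j < n - 1)%N then oget (g 0) (m + j) else 0))) => [|i _]; last first.
  by rewrite big_split.
rewrite big_split /= [X in X + _]big1 => [|i _]; last first.
  by rewrite -mulr_suml; have := Hr i; rewrite /rsum => ->; rewrite mul0r.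
rewrite add0r exchange_big big1 // => j _.
by rewrite -mulr_suml; have := Hc j; rewrite /csum => ->; rewrite mul0r.
Qed.

Lemma F3 T : free T -> (#|T| < N)%N -> exists c, c \notin T /\ free (c |: T).
Proof.
move=> Hf HT.
have [g Hg0 Hg] := G1 (fun l : 'I_#|T| => acolc (enum_val l)) HT.
have HgT : forall d, d \in T -> gdot g d.1 d.2 = 0.
  move=> d Hd; rewrite /gdot -/(acolc d) -(enum_rankK_in Hd Hd) Hg mxE //.
have [i [j [Hi Hj Hij]]] : exists i j, [/\ (i < m)%N, (j < n)%N & gdot g i j != 0].
  apply: NNPP => Hn; move/eqP: Hg0; apply; apply: gdot_zero => i j Hi Hj.
  apply/eqP; apply: negbNE; apply/negP => H; apply: Hn; by exists i, j.
pose c : cell := (Ordinal Hi, Ordinal Hj).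
have HcT : c \notin T by apply/negP => /HgT /=; apply/eqP.
exists c; split => // w Hs Hz.
have Hwc : w c.1 c.2 = 0.
  have := zm_gdot g Hz; rewrite pair_bigA /= (bigD1 c) //= big1 ?addr0.
    move/eqP; rewrite mulf_eq0 => /orP [/eqP //|H].
    by exfalso; move/negP: Hij; apply; exact: H.
  move=> d Hd; case: (boolP (d \in T)) => HdT; first by rewrite HgT ?mulr0.
  have : d \notin supp w.
    apply/negP => /(subsetP Hs); rewrite !inE (negbTE HdT) orbF => /eqP E.
    by rewrite E eqxx in Hd.
  by rewrite inE negbK => /eqP ->; rewrite mul0r.
apply: Hf Hz; apply/subsetP => d Hd.
have := subsetP Hs d Hd; rewrite !inE => /orP [/eqP Edc|//].
by move: Hd; rewrite inE Edc Hwc eqxx.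
Qed.

Lemma ext_free_aux k : forall T, free T -> (#|T| + k)%N = N ->
  exists T', [/\ T \subset T', free T' & #|T'| = N].
Proof.
elim: k => [|k IH] T Hf Hk.
  by exists T; split => //; rewrite -Hk addn0.
have HT' : (#|T| < N)%N by rewrite -Hk addnS ltnS leq_addr.
have [c [Hc Hfc]] := F3 Hf HT'.
have Hcard : #|c |: T| = #|T|.+1 by rewrite cardsU1 Hc.
have [T' [H1 H2 H3]] := IH _ Hfc (ltac:(rewrite Hcard -Hk addSnnS //)).
by exists T'; split => //; apply: subset_trans H1; apply: subsetUr.
Qed.

Lemma ext_free T : free T -> exists T', [/\ T \subset T', free T' & #|T'| = N].
Proof. by move=> Hf; apply: (ext_free_aux (k := (N - #|T|)%N) Hf); rewrite subnKC // free_card. Qed.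

Lemma big_rot s (f : nat -> R) : (0 < s)%N ->
  \sum_(k < s) f k = \sum_(k < s) f ((k + 1) %% s)%N.
Proof.
case: s => // s _; rewrite [LHS]big_ord_recl [RHS]big_ord_recr /= addn1 modnn addrC.
congr (_ + _); apply: eq_bigr => k _; by rewrite /bump /= add1n addn1 modn_small // ltnS ltn_ord.
Qed.

Lemma circ_dep T (x0 : cell) (c : seq cell) :
  is_circuit x0 c -> all (mem T) c -> free T -> False.
Proof.
move=> [Hs [Hu Hc]] Hall Hf.
set s := size c in Hs Hc.
have s0 : (0 < s)%N by lia.
pose nt k := nth x0 c k.
pose k1 k := ((k + 1) %% s)%N.
pose row k := (nt k).1 == (nt (k1 k)).1.
have k1k1 : forall k, k1 (k1 k) = ((k + 2) %% s)%N.
  by move=> k; rewrite /k1 modnDml -addnA.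
have Hk1 : forall k, (k1 k < s)%N by move=> k; rewrite ltn_mod.
have Hrc : forall k, (k < s)%N -> ~~ row k -> (nt k).2 == (nt (k1 k)).2.
  move=> k Hk Hnr; have [/andP [_ H] _] := Hc k Hk.
  by case/orP: H => // H; rewrite /row /nt /k1 H in Hnr.
have Hcr : forall k, (k < s)%N -> row k -> (nt k).2 != (nt (k1 k)).2.
  move=> k Hk Hr; have [/andP [H _] _] := Hc k Hk.
  apply: contra H => H2; apply/eqP; apply: injective_projections; apply/eqP.
    exact: Hr.
  exact: H2.
have Halt : forall k, (k < s)%N -> row (k1 k) = ~~ row k.
  move=> k Hk; have [_ [H1 H2]] := Hc k Hk.
  case: (boolP (row k)) => Hr.
    apply/negP => Hr1; move: H1; rewrite -/(nt _) -k1k1.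
    by rewrite -(eqP Hr1) (eqP Hr) eqxx.
  apply/negPn/negP => Hr1; move: H2; rewrite -/(nt _) -k1k1.
  by rewrite -(eqP (Hrc _ (Hk1 k) Hr1)) (eqP (Hrc _ Hk Hr)) eqxx.
pose al := fun k : 'I_s => if row k then 1 else -1 : R.
pose w := Wg al (fun k : 'I_s => nt k).
have Hz : zm w.
  split => [i|j]; [rewrite rsum_Wg | rewrite csum_Wg].
  - pose F k := ((nt k).1 == i)%:R : R.
    transitivity (\sum_(k < s) ((if row k then F k else 0) - (if ~~ row k then F k else 0))).
      by apply: eq_bigr => k _; rewrite /al /F; case: (row k); rewrite ?mul1r ?mulN1r ?subr0 ?sub0r.
    rewrite sumrB (big_rot (fun k => if ~~ row k then F k else 0)) //.
    rewrite -sumrB big1 // => k _; rewrite Halt // negbK.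
    case: (boolP (row k)) => Hr; last by rewrite subrr.
    by rewrite /F (eqP Hr) subrr.
  - pose G k := ((nt k).2 == j)%:R : R.
    transitivity (\sum_(k < s) ((if row k then G k else 0) - (if ~~ row k then G k else 0))).
      by apply: eq_bigr => k _; rewrite /al /G; case: (row k); rewrite ?mul1r ?mulN1r ?subr0 ?sub0r.
    rewrite sumrB (big_rot (fun k => if row k then G k else 0)) //.
    rewrite -sumrB big1 // => k _; rewrite Halt //.
    case: (boolP (row k)) => Hr; first by rewrite subrr.
    by rewrite /G (eqP (Hrc _ (ltn_ord k) Hr)) subrr.
have Hsup : supp w \subset T.
  apply/subsetP => d; rewrite inE => /Wg_supp [l El].
  rewrite -surjective_pairing in El; rewrite -El.
  by have := allP Hall (nt l) (mem_nth x0 (ltn_ord l)).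
have Hinj : injective (fun k : 'I_s => nt k).
  move=> k k' E; apply: val_inj; apply/eqP; rewrite -(nth_uniq x0 (ltn_ord k) (ltn_ord k') Hu).
  by apply/eqP.
have := Wg_inj al (Ordinal s0) Hinj; rewrite -/w (Hf w Hsup Hz) mxE /al.
by case: (row _) => /eqP; rewrite eq_sym ?oppr_eq0 oner_eq0.
Qed.

Lemma det_conn S : #|S| = N -> \det (struct_mx R S) != 0 -> connected_set (decS S).
Proof.
move=> HS Hd a b Ha Hb; apply/negPn/negP => Hn.
set T := decS S in Ha Hb Hn *.
set rl := [rel u v | [&& u \in T, v \in T & adjacent u v]] in Hn *.
pose C := [set d in T | connect rl a d].
pose u (i : nat) : R := [exists d in C, (d.1 : nat) == i]%:R.
pose v (j : nat) : R := - [exists d in C, (d.2 : nat) == j]%:R.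
have HC : forall d c, d \in C -> c \in T -> adjacent d c -> c \in C.
  move=> d c HdC Hc Hadj; move: HdC; rewrite [d \in C]inE => /andP [Hd1 Hd2].
  rewrite [c \in C]inE Hc /=.
  apply: connect_trans Hd2 (connect1 _); by rewrite /rl /= Hd1 Hc Hadj.
have H : forall c, c \in T -> u c.1 + v c.2 = 0.
  move=> c Hc; rewrite /u /v; case: (boolP (c \in C)) => HcC.
    have -> : [exists d in C, (d.1 : nat) == c.1] by apply/existsP; exists c; rewrite HcC eqxx.
    have -> : [exists d in C, (d.2 : nat) == c.2] by apply/existsP; exists c; rewrite HcC eqxx.
    by rewrite subrr.
  have -> : [exists d in C, (d.1 : nat) == c.1] = false.
    apply/negbTE/existsP => [[d /andP [HdC Hde]]]; move/negP: (HcC); apply.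
    have E : d.1 == c.1 by rewrite -val_eqE.
    apply: (HC d) => //; rewrite /adjacent E orTb andbT.
    by apply: contraNneq HcC => <-.
  have -> : [exists d in C, (d.2 : nat) == c.2] = false.
    apply/negbTE/existsP => [[d /andP [HdC Hde]]]; move/negP: (HcC); apply.
    have E : d.2 == c.2 by rewrite -val_eqE.
    apply: (HC d) => //; rewrite /adjacent E orbT andbT.
    by apply: contraNneq HcC => <-.
  by rewrite oppr0 addr0.
have := F2 HS Hd H (ltn_ord a.1) (ltn_ord b.2).
have -> : u a.1 = 1.
  rewrite /u; have -> // : [exists d in C, (d.1 : nat) == a.1].
  by apply/existsP; exists a; rewrite [a \in C]inE Ha connect0 eqxx.
have -> : v b.2 = 0.
  rewrite /v; have -> : [exists d in C, (d.2 : nat) == b.2] = false; last by rewrite oppr0.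
  apply/negbTE/existsP => [[d /andP [HdC Hde]]].
  have HbC : b \notin C by rewrite [b \in C]inE Hb /=.
  move/negP: (HbC); apply; apply: (HC d) => //.
  have E : d.2 == b.2 by rewrite -val_eqE.
  rewrite /adjacent E orbT andbT.
  by apply: contraNneq HbC => <-.
by move/eqP; rewrite addr0 oner_eq0.
Qed.

Lemma det_tree S : #|S| = N -> \det (struct_mx R S) != 0 -> is_tree (decS S).
Proof.
move=> HS Hd; split; first exact: det_conn.
by move=> [x0 [c [Hc Hall]]]; apply: (circ_dep Hc Hall (det_free HS Hd)).
Qed.

Definition vtx := ('I_m + 'I_n)%type.

Fixpoint walk (nr nc : cell -> cell) (c0 : cell) (k : nat) : cell :=
  if k is k'.+1 then (if odd k' then nr else nc) (walk nr nc c0 k') else c0.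

Lemma cell_eq (c c' : cell) (X Y : vtx) :
  (inl c.1 = X \/ inl c.1 = Y) -> (inr c.2 = X \/ inr c.2 = Y) ->
  (inl c'.1 = X \/ inl c'.1 = Y) -> (inr c'.2 = X \/ inr c'.2 = Y) -> c = c'.
Proof.
case: c => c1 c2; case: c' => c1' c2' /=.
by case=> H1; case=> H2; case=> H3; case=> H4; congruence.
Qed.

Lemma two_set (L Rr A1 A2 B1 B2 : vtx) : L <> Rr ->
  (L = A1 \/ L = A2) -> (Rr = A1 \/ Rr = A2) -> (L = B1 \/ L = B2) -> (Rr = B1 \/ Rr = B2) ->
  (A1 = B1 \/ A1 = B2) /\ (A2 = B1 \/ A2 = B2).
Proof.
move=> H0; case=> H1; case=> H2; case=> H3; case=> H4;
  split; first [by left; congruence | by right; congruence].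
Qed.

Lemma modcancel s k d e : (d < s)%N -> (e < s)%N -> ((k + d) %% s = (k + e) %% s)%N -> d = e.
Proof.
move=> Hd He /eqP; rewrite eqn_modDl !modn_small // => /eqP //.
Qed.

Lemma find_circuit (U : {set cell}) (nr nc : cell -> cell) (c0 : cell) :
  c0 \in U ->
  (forall c, c \in U -> [/\ nr c \in U, nr c != c & (nr c).1 = c.1]) ->
  (forall c, c \in U -> [/\ nc c \in U, nc c != c & (nc c).2 = c.2]) ->
  exists x0 cs, is_circuit x0 cs /\ all (mem U) cs.
Proof.
move=> Hc0 Hnr Hnc.
pose x := walk nr nc c0.
have Hx : forall k, x k \in U.
  elim => //= k IH; rewrite /x /=; case: (odd k); [have [H _ _] := Hnr _ IH | have [H _ _] := Hnc _ IH]; exact: H.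
have Hne : forall k, x k.+1 != x k.
  move=> k; rewrite /x /=; case: (odd k);
    [have [_ H _] := Hnr _ (Hx k) | have [_ H _] := Hnc _ (Hx k)]; exact: H.
pose v k : vtx := if odd k then inr (x k).2 else inl (x k).1.
have Hv1 : forall k, (inl (x k).1 = v k \/ inl (x k).1 = v k.+1) /\
                     (inr (x k).2 = v k \/ inr (x k).2 = v k.+1).
  move=> k; rewrite /v /=; case E: (odd k) => /=.
    have [_ _ H] := Hnr _ (Hx k).
    by split; [right; rewrite /x /= E H | left].
  have [_ _ H] := Hnc _ (Hx k).
  by split; [left | right; rewrite /x /= E H].
have [a0 [b0 [Hab Hv]]] : exists a b, (a < b)%N /\ v a = v b.
  apply: NNPP => Hn.
  have Hinj : injective (fun i : 'I_(#|{: vtx}|.+1) => v i).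
    move=> i j E; apply: val_inj; case: (ltngtP i j) => // H; exfalso; apply: Hn.
      by exists i, j.
    by exists j, i.
  by have := leq_card _ Hinj; rewrite card_ord ltnn.
pose P b := [exists a : 'I_b, v a == v b].
have exP : exists b, P b by exists b0; apply/existsP; exists (Ordinal Hab); rewrite Hv.
case: (ex_minnP exP) => b /existsP [a /eqP Ha] Hmin.
have Hmin2 : forall i j, (i < j)%N -> (j < b)%N -> v i <> v j.
  move=> i j Hij Hjb E; have : P j by apply/existsP; exists (Ordinal Hij); rewrite E.
  by move/Hmin; rewrite leqNgt Hjb.
have Hab' := ltn_ord a.
set s := (b - a)%N.
have s0 : (0 < s)%N by rewrite subn_gt0.
pose Vc i := v (a + i %% s)%N.
have VcE : forall i, (i <= s)%N -> v (a + i)%N = Vc i.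
  move=> i; rewrite leq_eqVlt => /orP [/eqP ->|Hi]; last by rewrite /Vc modn_small.
  by rewrite /Vc modnn addn0 subnKC ?Ha // ltnW.
have Vinj : forall i j, Vc i = Vc j -> (i %% s = j %% s)%N.
  move=> i j E; have Hi := ltn_pmod i s0; have Hj := ltn_pmod j s0.
  case: (ltngtP (i %% s) (j %% s)) => // H; exfalso.
    by apply: (Hmin2 (a + i %% s) (a + j %% s))%N => //; [rewrite ltn_add2l | lia].
  by apply: (Hmin2 (a + j %% s) (a + i %% s))%N => //; [rewrite ltn_add2l | lia].
have Vper : forall i, Vc (i %% s)%N = Vc i by move=> i; rewrite /Vc modn_mod.
have Hodd : odd a = odd b.
  by move: Ha; rewrite /v; case: (odd a); case: (odd b).
have seven : ~~ odd s by rewrite /s oddB; [rewrite Hodd addbb | exact: ltnW].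
pose y i := x (a + i %% s)%N.
have ymod : forall i, y (i %% s)%N = y i by move=> i; rewrite /y modn_mod.
have Hy : forall i, (inl (y i).1 = Vc i \/ inl (y i).1 = Vc i.+1) /\
                    (inr (y i).2 = Vc i \/ inr (y i).2 = Vc i.+1).
  move=> i; have Hi := ltn_pmod i s0.
  have E1 : v (a + i %% s)%N = Vc i by rewrite VcE ?Vper // ltnW.
  have E2 : v (a + i %% s).+1 = Vc i.+1.
    by rewrite -addnS VcE // /Vc -addn1 modnDml addn1.
  by have := Hv1 (a + i %% s)%N; rewrite E1 E2.
have s4 : (4 <= s)%N.
  have s2 : s != 2%N.
    apply/eqP => Hs2.
    have := Hy 0%N; have := Hy 1%N.
    have -> : Vc 2 = Vc 0 by rewrite -Vper Hs2.
    move=> [H1 H2] [H3 H4].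
    have E : y 0%N = y 1%N.
      apply: (cell_eq (X := Vc 0%N) (Y := Vc 1%N)); [exact: H3 | exact: H4 | |].
        by case: H1 => H; [right | left].
      by case: H2 => H; [right | left].
    move: (Hne a); rewrite /y Hs2 !modn_small // addn0 addn1 in E.
    by rewrite E eqxx.
  rewrite leqNgt; apply/negP => H4.
  have : (s = 1 \/ s = 2 \/ s = 3)%N by lia.
  by case=> [E|[E|E]]; move: seven s2; rewrite E.
have yinj : forall i j, y i = y j -> (i %% s = j %% s)%N.
  move=> i j E; have [H1 H2] := Hy i; have [H3 H4] := Hy j.
  rewrite E in H1 H2.
  have [] := two_set (L := inl (y j).1) (Rr := inr (y j).2) (ltac:(done)) H1 H2 H3 H4.
  case=> /Vinj Ha1; first by [].
  case=> /Vinj Ha2.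
    exfalso; rewrite -[i.+1]addn1 -[j.+1]addn1 in Ha1 Ha2.
    have e1 : ((j + 2) %% s = ((j + 1) %% s + 1) %% s)%N by rewrite modnDml -addnA.
    have e2 : (((i %% s) + 1) %% s = (i + 1) %% s)%N by rewrite modnDml.
    have : ((j + 2) %% s = (j + 0) %% s)%N by rewrite e1 -Ha1 e2 Ha2 addn0.
    by move/modcancel => H; have := H ltac:(lia) ltac:(lia).
  by move: Ha2; rewrite -[i.+1]addn1 -[j.+1]addn1 => /eqP; rewrite eqn_modDr => /eqP.
pose cs := mkseq y s.
have Hnth : forall k, nth c0 cs (k %% s)%N = y k.
  by move=> k; rewrite /cs nth_mkseq ?ltn_pmod // ymod.
have Hnth0 : forall k, (k < s)%N -> nth c0 cs k = y k.
  by move=> k Hk; rewrite -Hnth modn_small.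
have Hyne : forall k d e, (d < 4)%N -> (e < 4)%N -> d <> e -> Vc (k + d)%N <> Vc (k + e)%N.
  move=> k d e Hd He Hde /Vinj /modcancel H; apply: Hde; apply: H; lia.
exists c0, cs; split; last first.
  apply/allP => c /mapP [i _ ->]; exact: Hx.
rewrite /is_circuit size_mkseq; split => //; split.
  rewrite /cs /mkseq map_inj_in_uniq ?iota_uniq // => i j; rewrite !mem_iota /= => Hi Hj /yinj.
  by rewrite !modn_small.
move=> k Hk; rewrite Hnth0 // !Hnth.
have [H1 H2] := Hy k; have [H3 H4] := Hy (k + 1)%N; have [H5 H6] := Hy (k + 2)%N.
have N01 := Hyne k 0 1; have N02 := Hyne k 0 2; have N03 := Hyne k 0 3.
have N12 := Hyne k 1 2; have N13 := Hyne k 1 3.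
rewrite ?addn0 ?addn1 ?addn2 ?addn3 in N01 N02 N03 N12 N13.
rewrite ?addn1 ?addn2 in H3 H4 H5 H6 *.
split; [|split].
- rewrite /adjacent; apply/andP; split.
    apply/negP => /eqP E; have := yinj _ _ E.
    have := modcancel (s := s) (k := k) (d := 0) (e := 1); rewrite addn0 addn1 => H Hm.
    by have := H ltac:(lia) ltac:(lia) Hm.
  case: H1 => H1; case: H2 => H2; case: H3 => H3; case: H4 => H4;
    first [ (apply/orP; left; apply/eqP; congruence)
          | (apply/orP; right; apply/eqP; congruence)
          | (exfalso; congruence) ].
- apply/negP => /eqP E.
  case: H1 => H1; case: H5 => H5; rewrite E in H5.
  + by apply: N02; [lia | lia | lia | congruence].
  + by apply: N03; [lia | lia | lia | congruence].
  + by apply: N12; [lia | lia | lia | congruence].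
  + by apply: N13; [lia | lia | lia | congruence].
- apply/negP => /eqP E.
  case: H2 => H2; case: H6 => H6; rewrite E in H6.
  + by apply: N02; [lia | lia | lia | congruence].
  + by apply: N03; [lia | lia | lia | congruence].
  + by apply: N12; [lia | lia | lia | congruence].
  + by apply: N13; [lia | lia | lia | congruence].
Qed.

Lemma exists_other (I : finType) (f : I -> R) x :
  \sum_i f i = 0 -> f x != 0 -> exists y, y != x /\ f y != 0.
Proof.
move=> H Hx; apply: NNPP => Hn.
have H2 : \sum_(y | y != x) f y = 0.
  apply: big1 => y Hy; apply/eqP; apply: negbNE; apply/negP => Hf; apply: Hn; by exists y.
by move: H; rewrite (bigD1 x) //= H2 addr0 => Hfx; rewrite Hfx eqxx in Hx.
Qed.

Lemma nocirc_free T : ~ (exists x0 c, is_circuit x0 c /\ all (mem T) c) -> free T.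
Proof.
move=> Hnc w Hs [Hr Hc]; apply/matrixP => i j; rewrite mxE; apply: NNPP => Hw.
set U := supp w.
have HU : forall c, c \in U = (w c.1 c.2 != 0) by move=> c; rewrite inE.
pose nr c := odflt c [pick c' in U | (c' != c) && (c'.1 == c.1)].
pose nc c := odflt c [pick c' in U | (c' != c) && (c'.2 == c.2)].
have Hnr : forall c, c \in U -> [/\ nr c \in U, nr c != c & (nr c).1 = c.1].
  move=> c HcU; rewrite /nr; case: pickP => [c' /andP [H1 /andP [H2 /eqP H3]] | Hn] //=.
  exfalso; rewrite HU in HcU.
  have [j' [Hj' Hw']] := exists_other (Hr c.1) HcU.
  have := Hn (c.1, j'); rewrite HU /= Hw' /=.
  have -> : (c.1, j') != c by apply: contra Hj' => /eqP <-.
  by rewrite eqxx.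
have Hnc' : forall c, c \in U -> [/\ nc c \in U, nc c != c & (nc c).2 = c.2].
  move=> c HcU; rewrite /nc; case: pickP => [c' /andP [H1 /andP [H2 /eqP H3]] | Hn] //=.
  exfalso; rewrite HU in HcU.
  have [i' [Hi' Hw']] := exists_other (Hc c.2) HcU.
  have := Hn (i', c.2); rewrite HU /= Hw' /=.
  have -> : (i', c.2) != c by apply: contra Hi' => /eqP <-.
  by rewrite eqxx.
have Hc0 : (i, j) \in U by rewrite HU /=; apply/eqP.
have [x0 [cs [Hcs Hall]]] := find_circuit Hc0 Hnr Hnc'.
apply: Hnc; exists x0, cs; split => //.
by apply/allP => c /(allP Hall) /= /(subsetP Hs).
Qed.

Lemma tree_free T : is_tree T -> free T.
Proof. by case=> _; apply: nocirc_free. Qed.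
Implicit Types (A B P : 'M[R]_(m,n)).

Lemma rsumD A B i : rsum (A + B) i = rsum A i + rsum B i.
Proof. by rewrite /rsum -big_split; apply: eq_bigr => j _; rewrite mxE. Qed.
Lemma csumD A B j : csum (A + B) j = csum A j + csum B j.
Proof. by rewrite /csum -big_split; apply: eq_bigr => i _; rewrite mxE. Qed.
Lemma rsumZ a A i : rsum (a *: A) i = a * rsum A i.
Proof. by rewrite /rsum mulr_sumr; apply: eq_bigr => j _; rewrite mxE. Qed.
Lemma csumZ a A j : csum (a *: A) j = a * csum A j.
Proof. by rewrite /csum mulr_sumr; apply: eq_bigr => i _; rewrite mxE. Qed.
Lemma rsumN A i : rsum (- A) i = - rsum A i.
Proof. by rewrite /rsum -sumrN; apply: eq_bigr => j _; rewrite mxE. Qed.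
Lemma csumN A j : csum (- A) j = - csum A j.
Proof. by rewrite /csum -sumrN; apply: eq_bigr => i _; rewrite mxE. Qed.

Lemma suppB_sub A B T : supp A \subset T -> supp B \subset T -> supp (A - B) \subset T.
Proof.
move=> HA HB; apply/subsetP => c; rewrite inE !mxE => H.
case: (eqVneq (A c.1 c.2) 0) => HA0.
  apply: (subsetP HB); rewrite inE; apply: contra H => /eqP ->; by rewrite HA0 subr0.
by apply: (subsetP HA); rewrite inE.
Qed.

Lemma free_eq T A B : free T -> supp A \subset T -> supp B \subset T ->
  (forall i, rsum A i = rsum B i) -> (forall j, csum A j = csum B j) -> A = B.
Proof.
move=> Hf HA HB Hr Hc; apply/eqP; rewrite -subr_eq0; apply/eqP.
apply: Hf; first exact: suppB_sub.
by split => [i|j]; rewrite ?rsumD ?csumD ?rsumN ?csumN ?Hr ?Hc subrr.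
Qed.

Lemma sum_Wg (I : finType) (al : I -> R) ph : \sum_i rsum (Wg al ph) i = \sum_l al l.
Proof.
under eq_bigr do rewrite rsum_Wg.
rewrite exchange_big; apply: eq_bigr => l _; rewrite -mulr_sumr.
by rewrite (bigD1 (ph l).1) //= eqxx big1 ?addr0 ?mulr1 // => i Hi; rewrite eq_sym (negbTE Hi).
Qed.

Lemma PS_WS (p : 'I_m -> R) (q : 'I_n -> R) S : PS p q S = WS S (xvec p q S).
Proof. by []. Qed.

Lemma card_decS S : #|decS S| = #|S|.
Proof.
have -> : decS S = [set decn (val x) | x in S].
  apply/setP => c; rewrite inE; apply/idP/imsetP => [Hc|[x Hx ->]].
    by exists (enc c) => //; rewrite decn_enc.
  by rewrite enc_decn.
rewrite card_imset // => x y E; by rewrite -(enc_decn x) -(enc_decn y) /= E.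
Qed.

Lemma adm_of_free (p : 'I_m -> R) (q : 'I_n -> R) T P :
  probvec p -> probvec q -> free T -> #|T| = N -> transport p q P -> supp P \subset T ->
  admissible p q (encS T) /\ P = PS p q (encS T).
Proof.
move=> [_ Hp] [_ Hq] Hf HT [HP0 [HPr HPc]] HsP.
set S := encS T.
have HS : #|S| = N by rewrite card_encS.
have HdS : decS S = T by rewrite decS_encS.
have Hd : \det (struct_mx R S) != 0 by apply: free_det => //; rewrite HdS.
have Hu : struct_mx R S \in unitmx by rewrite unitmxE unitfE.
set x := xvec p q S.
have Ax : struct_mx R S *m x = yvec p q by rewrite /x /xvec mulKVmx.
have [Hr Hc] : (forall i, rsum (WS S x) i = p i) /\ (forall j, csum (WS S x) j = q j).
  by apply: Vy_inv => //; rewrite -struct_V.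
have HPW : P = WS S x.
  apply: (free_eq Hf) => //; first by rewrite -HdS; apply: supp_WS.
    by move=> i; rewrite Hr; apply: HPr.
  by move=> j; rewrite Hc; apply: HPc.
split => //; split => //; split => //; split.
  move=> k; have := Wg_inj (fun k => x k ord0) k (phS_inj HS).
  by rewrite -WS_Wg -HPW => <-; apply: HP0.
rewrite -(sum_Wg (fun k => x k ord0) (phS S)) -WS_Wg -HPW -Hp.
by apply: eq_bigr => i _; apply: HPr.
Qed.

Lemma adm_tree (p : 'I_m -> R) (q : 'I_n -> R) S :
  probvec p -> probvec q -> admissible p q S -> tree_transport p q (PS p q S).
Proof.
move=> [_ Hp] [_ Hq] [HS [Hd [Hx0 Hx1]]].
have Hu : struct_mx R S \in unitmx by rewrite unitmxE unitfE.
have Ax : struct_mx R S *m xvec p q S = yvec p q by rewrite /xvec mulKVmx.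
have [Hr Hc] : (forall i, rsum (PS p q S) i = p i) /\ (forall j, csum (PS p q S) j = q j).
  by apply: Vy_inv => //; rewrite PS_WS -struct_V.
split; first split.
- by move=> i j; rewrite mxE; apply: sumr_ge0 => k _; apply: Hx0.
- by split; [exact: Hr | exact: Hc].
exists (decS S); split; first exact: det_tree.
by split; [rewrite card_decS | rewrite PS_WS; apply: supp_WS].
Qed.

Lemma lb_pos (I : finType) (f : I -> R) : (forall x, 0 < f x) ->
  exists e, 0 < e /\ forall x, e <= f x.
Proof.
move=> Hf; have Hs : 0 <= \sum_x (f x)^-1 by apply: sumr_ge0 => x _; rewrite invr_ge0; apply: ltW.
exists (1 + \sum_x (f x)^-1)^-1; split; first by rewrite invr_gt0; lra.
move=> x; have Hx := Hf x.
rewrite -[X in _ <= X]invrK lef_pV2 ?posrE ?invr_gt0 //; last lra.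
rewrite (bigD1 x) //=.
have : 0 <= \sum_(y | y != x) (f y)^-1 by apply: sumr_ge0 => y _; rewrite invr_ge0; apply: ltW.
lra.
Qed.

Lemma exists_neg (I : finType) (f : I -> R) x :
  \sum_i f i = 0 -> f x != 0 -> exists y, f y < 0.
Proof.
move=> H Hx; apply: NNPP => Hn.
have H0 : forall i, 0 <= f i by move=> i; rewrite leNgt; apply/negP => Hi; apply: Hn; exists i.
by move/eqP: Hx; apply; apply: (psumr_eq0P (P := predT)) => // i _.
Qed.

Lemma extreme_free (p : 'I_m -> R) (q : 'I_n -> R) P :
  extreme_transport p q P -> free (supp P).
Proof.
move=> [[HP0 [HPr HPc]] Hext] w Hs Hz; apply/eqP; apply: negbNE; apply/negP => Hw.
pose f := fun c : cell =>
   if P c.1 c.2 == 0 then 1 else P c.1 c.2 / (1 + `|w c.1 c.2|).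
have Hfp : forall c, 0 < f c.
  move=> c; rewrite /f; case: eqP => // HP; apply: divr_gt0; last by have := normr_ge0 (w c.1 c.2); lra.
  by rewrite lt_def; apply/andP; split; [apply/eqP | apply: HP0].
have [e [He Hle]] := lb_pos Hfp.
have Hwp : forall i j, (`|e * w i j| <= P i j).
  move=> i j; have := Hle (i, j); rewrite /f /=.
  case: eqP => HP.
    have -> : w i j = 0.
      apply/eqP; apply: negbNE; apply/negP => Hwij.
      by have := subsetP Hs (i, j); rewrite !inE /= HP eqxx => /(_ Hwij).
    by rewrite mulr0 normr0 HP.
  rewrite ler_pdivlMr; last by have := normr_ge0 (w i j); lra.
  rewrite normrM (ger0_norm (ltW He)) => H; have := normr_ge0 (w i j); nra.
have Htr : forall s : R, (s = 1 \/ s = -1) -> transport p q (P + (s * e) *: w).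
  move=> s Hs1; split; last split.
  - move=> i j; rewrite !mxE; have := Hwp i j; rewrite -mulrA.
    have := ler_norm (e * w i j); have := ler_norm (- (e * w i j)); rewrite normrN.
    by case: Hs1 => -> ; rewrite ?mul1r ?mulN1r; lra.
  - by move=> i; rewrite -/(rsum _ i) rsumD rsumZ (proj1 Hz) mulr0 addr0; apply: HPr.
  - by move=> j; rewrite -/(csum _ j) csumD csumZ (proj2 Hz) mulr0 addr0; apply: HPc.
have := Hext _ _ (1/2) (Htr 1 (or_introl erefl)) (Htr (-1) (or_intror erefl)) ltac:(lra) ltac:(lra).
have Heq : P = 1/2 *: (P + (1 * e) *: w) + (1 - 1/2) *: (P + (-1 * e) *: w).
  by apply/matrixP => i j; rewrite !mxE; field.
move=> /(_ Heq) HAB; move/eqP: Hw; apply; apply/matrixP => i j.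
have := congr1 (fun M : 'M[R]_(m,n) => M i j) HAB; rewrite /= !mxE => H.
have : e * w i j = 0 by lra.
by move/eqP; rewrite mulf_eq0 => /orP [/eqP|/eqP //]; lra.
Qed.

Lemma fmin (I : finType) (Pr : I -> Prop) (f : I -> R) :
  (exists x, Pr x) -> exists x, Pr x /\ forall y, Pr y -> f x <= f y.
Proof.
suff H : forall s : seq I, (exists2 x, x \in s & Pr x) ->
    exists x, Pr x /\ forall y, y \in s -> Pr y -> f x <= f y.
  move=> [x Hx]; have [|z [Hz Hmin]] := H (enum I); first by exists x; rewrite ?mem_enum.
  exists z; split => // y Hy; apply: Hmin Hy; by rewrite mem_enum.
elim => [[x] //|a s IH [x Hx Hpx]].
case: (classic (exists2 x, x \in s & Pr x)) => Hs.
  have [z [Hz Hmin]] := IH Hs.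
  case: (classic (Pr a)) => Ha.
    case: (lerP (f a) (f z)) => Hle.
      exists a; split => // y; rewrite inE => /orP [/eqP ->|Hy] Hpy; first exact: lexx.
      exact: le_trans Hle (Hmin y Hy Hpy).
    exists z; split => // y; rewrite inE => /orP [/eqP ->|Hy] Hpy; first exact: ltW.
    exact: Hmin.
  exists z; split => // y; rewrite inE => /orP [/eqP ->|Hy] Hpy; last exact: Hmin.
  by exfalso; apply: Ha.
exists a; split.
  move: Hx; rewrite inE => /orP [/eqP <- //|Hx]; exfalso; apply: Hs; by exists x.
move=> y; rewrite inE => /orP [/eqP ->|Hy] Hpy; first exact: lexx.
by exfalso; apply: Hs; exists y.
Qed.

Lemma step_supp (p : 'I_m -> R) (q : 'I_n -> R) P w :
  transport p q P -> zm w -> w != 0 -> supp w \subset supp P ->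
  exists t, [/\ 0 < t, transport p q (P + t *: w) & (#|supp (P + t *: w)| < #|supp P|)%N].
Proof.
move=> [HP0 [HPr HPc]] [Hr Hc] Hw Hs.
have [c1 Hc1] : exists c : cell, w c.1 c.2 < 0.
  have [i [j Hij]] : exists i j, w i j != 0.
    apply: NNPP => Hn; move/eqP: Hw; apply; apply/matrixP => i j; rewrite mxE.
    apply/eqP; apply: negbNE; apply/negP => H; apply: Hn; by exists i, j.
  have [j' Hj'] := exists_neg (Hr i) Hij; by exists (i, j').
have [c [Hcn Hmin]] := fmin (Pr := fun c : cell => w c.1 c.2 < 0)
  (fun c : cell => P c.1 c.2 / - w c.1 c.2) (ex_intro _ c1 Hc1).
set t := P c.1 c.2 / - w c.1 c.2.
have HPc0 : P c.1 c.2 != 0.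
  have : c \in supp w by rewrite inE lt_eqF.
  by move/(subsetP Hs); rewrite inE.
have HPpos : 0 < P c.1 c.2 by rewrite lt_def HPc0 HP0.
have Ht : 0 < t by apply: divr_gt0 => //; rewrite oppr_gt0.
exists t; split => //.
  split; last split.
  - move=> i j; rewrite !mxE; have := HP0 i j; case: (ltP (w i j) 0) => Hwij.
      have := Hmin (i, j) Hwij; rewrite /= ler_pdivlMr ?oppr_gt0 // -/t => H1 H2; nra.
    by move=> H; nra.
  - by move=> i; rewrite -/(rsum _ i) rsumD rsumZ Hr mulr0 addr0; apply: HPr.
  - by move=> j; rewrite -/(csum _ j) csumD csumZ Hc mulr0 addr0; apply: HPc.
apply: proper_card; apply/properP; split.
  apply/subsetP => d; rewrite !inE !mxE => Hd.
  case: (eqVneq (w d.1 d.2) 0) => Hwd; first by move: Hd; rewrite Hwd mulr0 addr0.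
  by have := subsetP Hs d; rewrite !inE => /(_ Hwd).
exists c; first by rewrite inE.
rewrite inE !mxE negbK /t; apply/eqP; field; rewrite lt_eqF //.
Qed.

Lemma supp_opp (w : 'M[R]_(m,n)) : supp (- w) = supp w.
Proof. by apply/setP => c; rewrite !inE mxE oppr_eq0. Qed.

Lemma free_case (p : 'I_m -> R) (q : 'I_n -> R) P :
  probvec p -> probvec q -> transport p q P -> free (supp P) ->
  exists S, admissible p q S /\ P = PS p q S.
Proof.
move=> Hp Hq HP Hf; have [T [HsT HfT HT]] := ext_free Hf.
by exists (encS T); apply: adm_of_free.
Qed.

Lemma reduce (p : 'I_m -> R) (q : 'I_n -> R) (H : 'M[R]_(m, n) -> R) :
  probvec p -> probvec q -> strictly_concave_on p q H ->
  forall P, transport p q P -> exists S, admissible p q S /\ H (PS p q S) <= H P.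
Proof.
move=> Hp Hq Hconc P HP.
have [k Hk] : exists k, (#|supp P| <= k)%N by exists #|supp P|.
elim: k P Hk HP => [|k IH] P Hk HP.
  have [|S [HS E]] := free_case Hp Hq HP; last by exists S; rewrite -E.
  move=> w Hs _; apply/matrixP => i j; rewrite mxE; apply/eqP; apply: negbNE; apply/negP => Hw.
  have : (i, j) \in supp P by apply: (subsetP Hs); rewrite inE.
  by move: Hk; rewrite leqn0 => /eqP /card0_eq ->.
case: (classic (free (supp P))) => Hf.
  by have [S [HS E]] := free_case Hp Hq HP Hf; exists S; rewrite -E.
have [w [Hs Hz Hw]] : exists w, [/\ supp w \subset supp P, zm w & w != 0].
  apply: NNPP => Hn; apply: Hf => w Hs Hz; apply/eqP; apply: negbNE; apply/negP => Hw.
  by apply: Hn; exists w.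
have [t1 [Ht1 HP1 Hc1]] := step_supp HP Hz Hw Hs.
have Hz' : zm (- w) by case: Hz => Hr Hc; split => [i|j]; rewrite ?rsumN ?csumN ?Hr ?Hc oppr0.
have [t2 [Ht2 HP2 Hc2]] := step_supp HP Hz' (ltac:(by rewrite oppr_eq0)) (ltac:(by rewrite supp_opp)).
set P1 := P + t1 *: w in HP1 Hc1; set P2 := P + t2 *: - w in HP2 Hc2.
have [S1 [HS1 H1]] := IH P1 (ltac:(lia)) HP1.
have [S2 [HS2 H2]] := IH P2 (ltac:(lia)) HP2.
set l := t2 / (t1 + t2).
have Hl0 : 0 < l by apply: divr_gt0 => //; lra.
have Hl1 : l < 1 by rewrite /l ltr_pdivrMr; lra.
have Ecomb : l *: P1 + (1 - l) *: P2 = P.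
  apply/matrixP => i j; rewrite /P1 /P2 /l !mxE; field; lra.
have Hne : P1 != P2.
  apply/negP => /eqP E; move/eqP: Hw; apply; apply/matrixP => i j.
  have := congr1 (fun M : 'M[R]_(m,n) => M i j) E; rewrite /P1 /P2 /= !mxE => E'.
  have : (t1 + t2) * w i j = 0 by lra.
  by move/eqP; rewrite mulf_eq0 => /orP [/eqP|/eqP //]; lra.
have Hc := Hconc _ _ _ HP1 HP2 Hne Hl0 Hl1; rewrite Ecomb in Hc.
case: (lerP (H P1) (H P2)) => Hle.
  by exists S1; split => //; nra.
by exists S2; split => //; nra.
Qed.

Lemma P0_transport (p : 'I_m -> R) (q : 'I_n -> R) :
  probvec p -> probvec q -> transport p q (P0 p q).
Proof.
move=> [Hp0 Hp] [Hq0 Hq]; split; last split.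
- by move=> i j; rewrite mxE mulr_ge0.
- move=> i; rewrite (eq_bigr (fun j => p i * q j)) => [|j _]; last by rewrite mxE.
  by rewrite -mulr_sumr Hq mulr1.
- move=> j; rewrite (eq_bigr (fun i => p i * q j)) => [|i _]; last by rewrite mxE.
  by rewrite -mulr_suml Hp mul1r.
Qed.

Lemma main_sec (p : 'I_m -> R) (q : 'I_n -> R) :
  probvec p -> probvec q ->
  (forall i, 0 < p i) -> (forall j, 0 < q j) ->
  [/\ (forall P, extreme_transport p q P <-> tree_transport p q P),
      (forall P, tree_transport p q P <->
                 exists S : {set 'I_(m * n)}, admissible p q S /\ P = PS p q S)
    & forall H : 'M[R]_(m, n) -> R, strictly_concave_on p q H ->
      (exists P0, tree_transport p q P0 /\
                  forall P, transport p q P -> H P0 <= H P) /\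
      (exists S, admissible p q S /\
                  forall P, transport p q P -> H (PS p q S) <= H P)].
Proof.
move=> Hp Hq _ _.
have Pt : forall P, tree_transport p q P -> exists S, admissible p q S /\ P = PS p q S.
  move=> P [HP [T [HT [HTc HsT]]]].
  by exists (encS T); apply: adm_of_free => //; apply: tree_free.
split.
- move=> P; split.
    move=> Hext; have [S [HS E]] := free_case Hp Hq Hext.1 (extreme_free Hext).
    by rewrite E; apply: adm_tree.
  move=> [HP [T [HT [HTc HsT]]]]; split => // A B t HA HB Ht0 Ht1 E.
  have Hf := tree_free HT.
  have [HA0 [HAr HAc]] := HA; have [HB0 [HBr HBc]] := HB.
  have Hsub : forall (C : 'M[R]_(m, n)) (a : R), 0 < a -> (forall i j, 0 <= C i j) ->
      (forall i j, a * C i j <= P i j) -> supp C \subset T.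
    move=> C a Ha HC0 HC; apply/subsetP => c; rewrite inE => Hc.
    apply: (subsetP HsT); rewrite inE.
    have Hcp : 0 < C c.1 c.2 by rewrite lt_def Hc HC0.
    have := HC c.1 c.2 => H; apply: lt0r_neq0; apply: lt_le_trans H; exact: mulr_gt0.
  apply: (free_eq Hf).
  - apply: (Hsub A t) => // i j; rewrite E !mxE; have := HB0 i j; nra.
  - apply: (Hsub B (1 - t)); first lra; move=> // i j; rewrite E !mxE; have := HA0 i j; nra.
  - by move=> i; rewrite /rsum HAr HBr.
  - by move=> j; rewrite /csum HAc HBc.
- move=> P; split; first exact: Pt.
  by move=> [S [HS ->]]; apply: adm_tree.
- move=> H Hconc.
  have [S0 [HS0 _]] := reduce Hp Hq Hconc (P0_transport Hp Hq).
  have [S [HS Hmin]] := fmin (Pr := admissible p q) (fun S => H (PS p q S)) (ex_intro _ S0 HS0).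
  have Hall : forall P, transport p q P -> H (PS p q S) <= H P.
    move=> P HP; have [S' [HS' H']] := reduce Hp Hq Hconc HP.
    exact: le_trans (Hmin S' HS') H'.
  split; first by exists (PS p q S); split => //; apply: adm_tree.
  by exists S.
Qed.

End Main.

Unset Implicit Arguments.

Theorem theorem3p2 (R : realType) (m n : nat) (p : 'I_m -> R) (q : 'I_n -> R) :
  (2 <= m)%N -> (2 <= n)%N ->
  probvec p -> probvec q ->
  (forall i, 0 < p i) -> (forall j, 0 < q j) ->
  [/\ (forall P, extreme_transport p q P <-> tree_transport p q P),
      (forall P, tree_transport p q P <->
                 exists S : {set 'I_(m * n)}, admissible p q S /\ P = PS p q S)
    & forall H : 'M[R]_(m, n) -> R, strictly_concave_on p q H ->
      (exists P0, tree_transport p q P0 /\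
                  forall P, transport p q P -> H P0 <= H P) /\
      (exists S, admissible p q S /\
                  forall P, transport p q P -> H (PS p q S) <= H P)].
Proof.
move=> hm hn Hp Hq Hp0 Hq0.
exact: (@main_sec R m n hm hn p q Hp Hq Hp0 Hq0).
Qed.
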